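(* Fix an iteration $t$, an agent $p$, and a noise realization $\xi\in\mathbb{R}^{J\times K}$. Let $w^{t+1},\lambda^t_p,z^t_p\in\mathbb{R}^{J\times K}$, $\rho^t>0$, $\delta^t>0$ be given and $$\Phi(z)=\langle f'_p(z^t_p;\mathcal{D}_p),z\rangle+\tfrac{\rho^t}{2}\big\|w^{t+1}-z+\tfrac1{\rho^t}(\lambda^t_p-\xi)\big\|^2 .$$ Let $z^{t+1}_p(\mathcal{D}_p)=\operatorname{argmin}_{z\in\mathcal{W}\cap\widehat{\mathcal{W}}^t_p}\Phi(z)$ where $\widehat{\mathcal{W}}^t_p=\{z:\|z-z^t_p\|\le\delta^t\}$, and for $\ell>0$ let $z^{t+1}_p(\ell,\mathcal{D}_p)=\operatorname{argmin}_{z\in\mathbb{R}^{J\times K}}\Phi(z)+\sum_{m=1}^M\ln(1+e^{\ell h^t_m(z)})$. Then $\lim_{\ell\to\infty}z^{t+1}_p(\ell,\mathcal{D}_p)=z^{t+1}_p(\mathcal{D}_p)$.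
   Context: $\mathbb{R}^{J\times K}$ carries the Frobenius inner product and norm. $f_p(\cdot;\mathcal{D}_p)$ is the local empirical risk $\frac1I\sum_i\varphi(z;x_{pi},y_{pi})+\frac\beta Pr(z)$ (convex loss $\varphi$, convex regularizer $r$, $\beta>0$) and $f'_p(z^t_p;\mathcal{D}_p)$ a subgradient at $z^t_p$. $\mathcal{W}\subset\mathbb{R}^{J\times K}$ is compact convex, and $\mathcal{W}\cap\widehat{\mathcal{W}}^t_p=\{z:h^t_m(z)\le0,\ m\in[M]\}$ with each $h^t_m$ convex and twice continuously differentiable. Both problems have strongly convex objectives and unique minimizers. *)

(* Defs.v *)
From mathcomp Require Import all_boot all_order all_algebra.
From mathcomp Require Import all_classical all_reals all_analysis.
Set Implicit Arguments. Unset Strict Implicit. Unset Printing Implicit Defensive.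
Import Order.TTheory GRing.Theory Num.Theory numFieldNormedType.Exports.
Local Open Scope ring_scope.
Local Open Scope classical_set_scope.

Section Defs.
Context {R : realType} {J K : nat}.
Local Notation Mat := 'M[R]_(J, K).

Definition frob_dot (A B : Mat) : R := \sum_(i < J) \sum_(j < K) A i j * B i j.
Definition frob_norm (A : Mat) : R := Num.sqrt (frob_dot A A).

Definition subgradient (f : Mat -> R) (z g : Mat) : Prop :=
  forall y, f z + frob_dot g (y - z) <= f y.

Definition C2 (h : Mat -> R) : Prop :=
  forall u v : Mat,
    (forall z, derivable h z u) /\
    (forall z, derivable ('D_u h) z v) /\
    continuous ('D_v ('D_u h)).

Definition emp_risk {X Y : Type} {I : nat} (phi : Mat -> X -> Y -> R)
  (r : Mat -> R) (beta : R) (P : nat) (xs : 'I_I -> X) (ys : 'I_I -> Y)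
  (z : Mat) : R :=
  (I%:R)^-1 * (\sum_(i < I) phi z (xs i) (ys i)) + beta / P%:R * r z.

Definition Phi (g w lam xi : Mat) (rho : R) (z : Mat) : R :=
  frob_dot g z + rho / 2 * (frob_norm (w - z + rho^-1 *: (lam - xi))) ^+ 2.

Definition penalty {M : nat} (h : 'I_M -> Mat -> R) (l : R) (z : Mat) : R :=
  \sum_(m < M) ln (1 + expR (l * h m z)).

End Defs.

(* Main.v *)
Require Import Defs.
From mathcomp Require Import all_boot all_order all_algebra.
From mathcomp Require Import all_classical all_reals all_analysis.
From mathcomp Require Import ring lra.
Import Order.TTheory GRing.Theory Num.Theory numFieldNormedType.Exports.
Local Open Scope ring_scope.
Local Open Scope classical_set_scope.

Section S.
Context {R : realType} {J K : nat}.
Local Notation Mat := 'M[R]_(J, K).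

Definition psi (s : R) := ln (1 + expR s).

Lemma psi_ge0 s : 0 <= psi s.
Proof. by rewrite /psi ln_ge0 // lerDl ltW ?expR_gt0. Qed.

Lemma psi_ge s : s <= psi s.
Proof.
rewrite /psi -{1}(expRK s) ler_ln ?posrE ?expR_gt0 ?addr_gt0 ?expR_gt0 //.
by rewrite lerDr.
Qed.

Lemma psi_mono a b : a <= b -> psi a <= psi b.
Proof.
move=> ab; rewrite /psi ler_ln ?posrE ?addr_gt0 ?expR_gt0 //.
by rewrite lerD2l ler_expR.
Qed.

Lemma psi_lip a b : psi a <= psi b + `|a - b|.
Proof.
have [ab|ba] := leP a b.
  by rewrite (le_trans (@psi_mono a b ab)) // lerDl.
rewrite gtr0_norm ?subr_gt0 // addrC.
rewrite /psi -{1}(expRK (a - b)) -lnM ?posrE ?expR_gt0 ?addr_gt0 ?expR_gt0 //.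
rewrite ler_ln ?posrE ?mulr_gt0 ?expR_gt0 ?addr_gt0 ?expR_gt0 //.
rewrite mulrDr mulr1 -expRD subrK lerD2r.
by rewrite -expR0 ler_expR subr_ge0 ltW.
Qed.

Lemma psi_le_exp s : psi s <= expR s.
Proof. by rewrite /psi le_ln1Dx // (lt_le_trans _ (ltW (expR_gt0 s))) // ltrN10. Qed.

Definition Q (x : Mat) := frob_dot x x.

Lemma Q_ge0 x : 0 <= Q x.
Proof. by apply: sumr_ge0 => i _; apply: sumr_ge0 => j _; exact: sqr_ge0. Qed.

Lemma Q_entry (x : Mat) i j : x i j ^+ 2 <= Q x.
Proof.
rewrite /Q /frob_dot (bigD1 i) //= (bigD1 j) //= -addrA expr2 lerDl.
by rewrite addr_ge0 // sumr_ge0 // => *; [exact: sqr_ge0| apply: sumr_ge0 => *; exact: sqr_ge0].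
Qed.

Lemma abs_le_Q (x : Mat) i j : `|x i j| <= 1 + Q x.
Proof.
suff H : `|x i j| <= 1 + x i j ^+ 2.
  by apply: (le_trans H); rewrite lerD2l Q_entry.
have [xl1|xg1] := leP `|x i j| 1.
  by rewrite (le_trans xl1) // lerDl sqr_ge0.
rewrite (le_trans _ (ler_wpDl ler01 (le_refl _))) //.
by rewrite -real_normK ?num_real // expr2 ler_peMl // ltW.
Qed.
Lemma frob_dotE (A B : Mat) :
  frob_dot A B = \sum_(p : 'I_J * 'I_K) A p.1 p.2 * B p.1 p.2.
Proof. by rewrite /frob_dot pair_bigA. Qed.

Ltac fsum := rewrite /Q ?frob_dotE ?mulr_sumr -?sumrN -?big_split /=;
  apply: eq_bigr => ij _; rewrite ?mxE.

Definition pp (g w lam xi : Mat) (rho : R) : Mat :=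
  w + rho^-1 *: (lam - xi) - rho^-1 *: g.
Definition K0 (g w lam xi : Mat) (rho : R) : R :=
  frob_dot g (w + rho^-1 *: (lam - xi)) - (2 * rho)^-1 * Q g.

Lemma Phi_Q g w lam xi rho z : 0 < rho ->
  Phi g w lam xi rho z = rho / 2 * Q (z - pp g w lam xi rho) + K0 g w lam xi rho.
Proof.
move=> r0; rewrite /Phi /frob_norm sqr_sqrtr; last exact: Q_ge0.
rewrite /K0 /pp; fsum.
by field; rewrite gt_eqF.
Qed.

Lemma Q_par (a b p : Mat) :
  Q (2^-1 *: (a + b) - p) = 2^-1 * Q (a - p) + 2^-1 * Q (b - p) - 4^-1 * Q (a - b).
Proof. by fsum; field. Qed.
Definition Cx (x : Mat) := \sum_(p : 'I_J * 'I_K) (2 * `|x p.1 p.2| + 1).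

Lemma Q_add_bound (x e : Mat) r : 0 <= r -> r <= 1 ->
  (forall i j, `|e i j| <= r) -> `|Q (x + e) - Q x| <= Cx x * r.
Proof.
move=> r0 r1 er.
have -> : Q (x + e) - Q x =
    \sum_(p : 'I_J * 'I_K) (2 * x p.1 p.2 * e p.1 p.2 + e p.1 p.2 ^+ 2).
  by fsum; ring.
rewrite /Cx mulr_suml; apply: le_trans (ler_norm_sum _ _ _) _.
apply: ler_sum => ij _.
have := er ij.1 ij.2; set a := x ij.1 ij.2; set b := e ij.1 ij.2 => br.
apply: (le_trans (ler_normD _ _)).
rewrite !normrM ger0_norm // -expr2.
have a0 := normr_ge0 a; have b0 := normr_ge0 b.
have h1 : 0 <= `|a| * (r - `|b|) by rewrite mulr_ge0 // subr_ge0.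
have h2 : `|b| ^+ 2 <= r.
  rewrite expr2 (le_trans _ br) // ler_piMr //.
  exact: le_trans br r1.
nra.
Qed.
Lemma cvx_ineq (h : Mat -> R) : convex_function setT h ->
  forall a x y, 0 <= a -> a <= 1 ->
  h (a *: x + (1-a) *: y) <= a * h x + (1-a) * h y.
Proof.
move=> H a x y a0 a1; have := H (Itv01 a0 a1) x y (in_setT _) (in_setT _).
by [].
Qed.

Lemma der_ball (h : Mat -> R) y v : derivable h y v -> forall e, 0 < e ->
  exists2 r, 0 < r & forall t, 0 < `|t| -> `|t| < r ->
    `|t^-1 * (h (y + t *: v) - h y) - 'D_v h y| < e.
Proof.
move=> dh e e0.
have := (@cvgrPdist_lt _ _ _ _ (dnbhs_filter 0) _ _).1 dh e e0.
rewrite near_withinE => /nbhs_ballP -[r /= r0 Hr].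
exists r => // t t0 tr.
have := Hr t; rewrite /ball /= sub0r normrN => /(_ tr).
rewrite -normr_gt0 t0 => /(_ isT).
by rewrite distrC /= [y + _]addrC.
Qed.

Lemma quot_mono (h : Mat -> R) y v tau t : convex_function setT h ->
  0 < tau -> tau <= t ->
  tau^-1 * (h (y + tau *: v) - h y) <= t^-1 * (h (y + t *: v) - h y).
Proof.
move=> hc tau0 taut.
have t0 : 0 < t by apply: lt_le_trans taut.
set s := tau / t.
have s0 : 0 <= s by rewrite divr_ge0 // ltW.
have s1 : s <= 1 by rewrite ler_pdivrMr // mul1r.
have e : y + tau *: v = s *: (y + t *: v) + (1 - s) *: y.
  rewrite scalerDr scalerA divfK ?gt_eqF // addrAC -scalerDl.
  by rewrite [s + _]addrC subrK scale1r addrC.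
have := @cvx_ineq h hc s (y + t *: v) y s0 s1; rewrite -e => H.
have H2 : h (y + tau *: v) - h y <= s * (h (y + t *: v) - h y) by lra.
have -> : t^-1 * (h (y + t *: v) - h y) = tau^-1 * (s * (h (y + t *: v) - h y)).
  by rewrite /s; field; rewrite !gt_eqF.
by rewrite ler_wpM2l // invr_ge0 ltW.
Qed.

Lemma der_le_quot (h : Mat -> R) y v t : convex_function setT h ->
  derivable h y v -> 0 < t ->
  'D_v h y <= t^-1 * (h (y + t *: v) - h y).
Proof.
move=> hc dh t0; apply/ler_addgt0Pr => e e0.
have [r r0 Hr] := @der_ball h y v dh e e0.
set tau := Num.min t (r / 2).
have tau0 : 0 < tau by rewrite lt_min t0 divr_gt0.
have taut : tau <= t by rewrite ge_min lexx.
have taur : tau < r.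
  by rewrite gt_min; apply/orP; right; rewrite ltr_pdivrMr // ltr_pMr // ltr1n.
have := Hr tau; rewrite gtr0_norm // => /(_ tau0 taur).
have := @quot_mono h y v tau t hc tau0 taut.
move: (tau^-1 * _) => q; move: (t^-1 * _) => q' qq'.
rewrite ltr_norml => /andP[H1 H2]; lra.
Qed.
Lemma der_subadd (h : Mat -> R) y u v : convex_function setT h ->
  (forall w, derivable h y w) -> 'D_(u + v) h y <= 'D_u h y + 'D_v h y.
Proof.
move=> hc dh; apply/ler_addgt0Pr => e e0.
have e20 : 0 < e / 2 by rewrite divr_gt0.
have [ru ru0 Hu] := @der_ball h y u (dh u) _ e20.
have [rv rv0 Hv] := @der_ball h y v (dh v) _ e20.
set m := Num.min ru rv.
have m0 : 0 < m by rewrite lt_min ru0.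
have mu : m <= ru by rewrite ge_min lexx.
have mv : m <= rv by rewrite ge_min lexx orbT.
set tau := m / 4.
have tau0 : 0 < tau by rewrite /tau; lra.
have t20 : 0 < 2 * tau by lra.
have t2u : `|2 * tau| < ru by rewrite gtr0_norm //; rewrite /tau; lra.
have t2v : `|2 * tau| < rv by rewrite gtr0_norm //; rewrite /tau; lra.
have n2 : 0 < `|2 * tau| by rewrite normr_gt0 gt_eqF.
have := Hu _ n2 t2u.
have := Hv _ n2 t2v.
have := @der_le_quot h y (u + v) tau hc (dh _) tau0.
have e1 : y + tau *: (u + v) =
    2^-1 *: (y + (2 * tau) *: u) + (1 - 2^-1) *: (y + (2 * tau) *: v).
  by apply/matrixP => i j; rewrite !mxE; field.
have := @cvx_ineq h hc 2^-1 (y + (2 * tau) *: u) (y + (2 * tau) *: v).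
rewrite -e1 invr_ge0 ler0n invf_le1 ?ler1n // => /(_ isT isT).
set A := h (y + (2 * tau) *: u); set B := h (y + (2 * tau) *: v).
set H := h (y + tau *: (u + v)); set C := h y.
move=> HH Hq.
have Hq2 : tau^-1 * (H - C) <= (2 * tau)^-1 * (A - C) + (2 * tau)^-1 * (B - C).
  have -> : (2 * tau)^-1 * (A - C) + (2 * tau)^-1 * (B - C) =
      tau^-1 * (2^-1 * A + (1 - 2^-1) * B - C).
    by field; rewrite gt_eqF.
  by apply: ler_wpM2l; [rewrite invr_ge0 ltW | lra].
rewrite !ltr_norml => /andP[_ H1] /andP[_ H2].
lra.
Qed.
Lemma der_homog (h : Mat -> R) y v c : convex_function setT h ->
  derivable h y v -> derivable h y (c *: v) -> 0 < c ->
  'D_(c *: v) h y <= c * 'D_v h y.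
Proof.
move=> hc dv dcv c0; apply/ler_addgt0Pr => e e0.
have ec0 : 0 < e / c by rewrite divr_gt0.
have [r r0 Hr] := @der_ball h y v dv _ ec0.
set tau := r / (2 * c).
have tau0 : 0 < tau by rewrite divr_gt0 // mulr_gt0.
have ct0 : 0 < `|c * tau| by rewrite normr_gt0 gt_eqF // mulr_gt0.
have ctr : `|c * tau| < r.
  have -> : c * tau = r / 2 by rewrite /tau; field; rewrite gt_eqF.
  rewrite gtr0_norm ?divr_gt0 //; lra.
have := Hr _ ct0 ctr; rewrite ltr_norml => /andP[_ H1].
have := @der_le_quot h y (c *: v) tau hc dcv tau0.
rewrite scalerA [tau * c]mulrC.
have -> : tau^-1 * (h (y + (c * tau) *: v) - h y) =
    c * ((c * tau)^-1 * (h (y + (c * tau) *: v) - h y)).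
  by field; rewrite !gt_eqF.
move: ((c * tau)^-1 * _) H1 => q H1 H2.
have : c * q <= c * ('D_v h y + e / c) by rewrite ler_wpM2l ?ltW //; lra.
rewrite mulrDr mulrCA divff ?gt_eqF // mulr1 => H3.
lra.
Qed.

Lemma der_sum_le (h : Mat -> R) y (I : Type) (s : seq I) (F : I -> Mat) :
  convex_function setT h -> (forall w, derivable h y w) ->
  'D_(\sum_(i <- s) F i) h y <= \sum_(i <- s) 'D_(F i) h y.
Proof.
move=> hc dh; elim: s => [|a s IH].
  by rewrite !big_nil derive0.
rewrite !big_cons; apply: (le_trans (@der_subadd h y _ _ hc dh)).
by rewrite lerD2l.
Qed.

Definition Mdir (h : Mat -> R) y (E : Mat) :=
  Num.max 0 (Num.max ('D_E h y) ('D_(- E) h y)).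

Lemma Mdir_ge0 h y E : 0 <= Mdir h y E.
Proof. by rewrite /Mdir le_max lexx. Qed.

Lemma der_scale_le (h : Mat -> R) y c E : convex_function setT h ->
  (forall w, derivable h y w) -> 'D_(c *: E) h y <= `|c| * Mdir h y E.
Proof.
move=> hc dh.
have [c0|c0|->] := ltgtP c 0; last first.
- by rewrite scale0r derive0 mulr_ge0 // Mdir_ge0.
- apply: (le_trans (@der_homog h y _ _ hc (dh _) (dh _) c0)).
  rewrite gtr0_norm //; apply: ler_wpM2l; first exact: ltW.
  by rewrite /Mdir !le_max lexx !orbT.
- have -> : c *: E = (- c) *: (- E) by rewrite scaleNr scalerN opprK.
  have c0' : 0 < - c by rewrite oppr_gt0.
  apply: (le_trans (@der_homog h y _ _ hc (dh _) (dh _) c0')).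
  rewrite ltr0_norm //; apply: ler_wpM2l; first exact: ltW.
  by rewrite /Mdir !le_max lexx !orbT.
Qed.

Lemma lsc (h : Mat -> R) y : convex_function setT h ->
  (forall w, derivable h y w) ->
  exists2 C, 0 <= C & forall (z : Mat) r, (forall i j, `|z i j - y i j| <= r) ->
    h y - C * r <= h z.
Proof.
move=> hc dh.
exists (\sum_(i < J) \sum_(j < K) Mdir h y (delta_mx i j)).
  by apply: sumr_ge0 => i _; apply: sumr_ge0 => j _; exact: Mdir_ge0.
move=> z r zr.
have H1 := @der_le_quot h y (z - y) 1 hc (dh _) ltr01.
rewrite invr1 mul1r scale1r (_ : y + (z - y) = z) in H1; last first.
  by rewrite addrC subrK.
have H2 := @der_subadd h y (z - y) (y - z) hc dh.
rewrite (_ : z - y + (y - z) = 0) ?derive0 in H2; last first.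
  by rewrite addrA subrK subrr.
suff H3 : 'D_(y - z) h y <=
   (\sum_(i < J) \sum_(j < K) Mdir h y (delta_mx i j)) * r by lra.
rewrite {1}(matrix_sum_delta (y - z)).
apply: (le_trans (@der_sum_le h y _ _ _ hc dh)).
rewrite mulr_suml; apply: ler_sum => i _.
apply: (le_trans (@der_sum_le h y _ _ _ hc dh)).
rewrite mulr_suml; apply: ler_sum => j _.
apply: (le_trans (@der_scale_le h y _ _ hc dh)).
rewrite mulrC ler_wpM2l ?Mdir_ge0 //.
by rewrite !mxE distrC zr.
Qed.
Lemma strong M (h : 'I_M -> Mat -> R) (p zs : Mat) :
  (forall m, convex_function setT (h m)) -> (forall m, h m zs <= 0) ->
  (forall z, (forall m, h m z <= 0) -> Q (zs - p) <= Q (z - p)) ->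
  forall z, (forall m, h m z <= 0) -> Q (zs - p) + 2^-1 * Q (z - zs) <= Q (z - p).
Proof.
move=> hc hzs zmin z hz.
have hmid : forall m, h m (2^-1 *: (z + zs)) <= 0.
  move=> m.
  have -> : 2^-1 *: (z + zs) = 2^-1 *: z + (1 - 2^-1) *: zs.
    by apply/matrixP => i j; rewrite !mxE; field.
  apply: (le_trans (@cvx_ineq (h m) (hc m) 2^-1 z zs _ _)).
  - by rewrite invr_ge0 ler0n.
  - by rewrite invf_le1 ?ler1n.
  have := hz m; have := hzs m; lra.
have := zmin _ hmid; rewrite Q_par; lra.
Qed.

Lemma small_mul (C e : R) : 0 <= C -> 0 < e -> C * (e / (C + 1)) <= e.
Proof.
move=> C0 e0; rewrite mulrA ler_pdivrMr ?ltr_wpDl //; nra.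
Qed.

Lemma near_right (b : R) (P : R -> Prop) : 0 < b ->
  (forall e, 0 < e -> e < b -> P e) -> \forall e \near 0^'+, P e.
Proof.
move=> b0 H; near=> e; apply: H.
  by near: e; exact: nbhs_right_gt.
by near: e; exact: nbhs_right_lt.
Unshelve. all: by end_near. Qed.

Lemma claim M (h : 'I_M -> Mat -> R) (p zs : Mat) :
  (forall m, convex_function setT (h m)) ->
  (forall m z w, derivable (h m) z w) -> (forall m, h m zs <= 0) ->
  (forall z, (forall m, h m z <= 0) -> Q (zs - p) <= Q (z - p)) ->
  forall d, 0 < d -> exists2 eta, 0 < eta & forall z, (forall m, h m z <= eta) ->
    Q (z - p) <= Q (zs - p) + eta -> Q (z - zs) < d.
Proof.
move=> hc hd hzs zmin d d0.
set Qs := Q (zs - p).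
have [Hyes|H] := pselect (exists2 eta, 0 < eta & forall z, (forall m, h m z <= eta) ->
    Q (z - p) <= Qs + eta -> Q (z - zs) < d); first exact: Hyes.
have bad : forall eta, exists z, 0 < eta -> [/\ (forall m, h m z <= eta),
    Q (z - p) <= Qs + eta & d <= Q (z - zs)].
  move=> eta; have [eta0|eta0] := ltP 0 eta; last by exists 0.
  apply: contrapT => nz; apply: H; exists eta => // z Hh HQ.
  by rewrite ltNge; apply/negP => dz; apply: nz; exists z => _; split => //; rewrite leNgt.
have [zf Hzf] := choice bad.
have vE : forall (u : 'rV[R]_(J * K)) i j, vec_mx u i j = u ord0 (mxvec_index i j).
  by move=> u i j; rewrite -{2}(vec_mxK u) mxvecE.
set Rc := 3 + Qs + Q p.
set Cb := [set v : 'rV[R]_(J * K) | forall i, `[- Rc, Rc]%classic (v ord0 i)].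
have Cc : compact Cb.
  apply: (@rV_compact _ _ (fun=> `[- Rc, Rc]%classic)) => _.
  exact: segment_compact.
set F := (fun eta => mxvec (zf eta)) @ 0^'+.
have FC : F Cb.
  suff : \forall eta \near 0^'+, Cb (mxvec (zf eta)) by [].
  apply: (@near_right 1 (fun eta => Cb (mxvec (zf eta))) ltr01) => eta eta0 eta1 k.
  have [_ HQ _] := Hzf eta eta0.
  case/mxvec_indexP: k => i j; rewrite mxvecE /= in_itv /= -ler_norml.
  have := abs_le_Q (zf eta - p) i j; have := abs_le_Q p i j.
  rewrite !mxE => H1 H2.
  have H3 : `|zf eta i j| <= `|zf eta i j - p i j| + `|p i j|.
    by rewrite -[X in `|X|](subrK (p i j)) ler_normD.
  rewrite /Rc; lra.
have [vb [Cvb clv]] := Cc F _ FC.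
set zb := vec_mx vb.
have approx : forall e r, 0 < e -> 0 < r -> exists w : Mat,
    [/\ (forall m, h m w <= e), Q (w - p) <= Qs + e, d <= Q (w - zs) &
        forall i j, `|w i j - zb i j| <= r].
  move=> e r e0 r0.
  have FA : F [set v | [/\ (forall m, h m (vec_mx v) <= e),
      Q (vec_mx v - p) <= Qs + e & d <= Q (vec_mx v - zs)]].
    suff : \forall eta \near 0^'+, [/\ (forall m, h m (vec_mx (mxvec (zf eta))) <= e),
      Q (vec_mx (mxvec (zf eta)) - p) <= Qs + e & d <= Q (vec_mx (mxvec (zf eta)) - zs)].
      by [].
    apply: (@near_right e _ e0) => eta eta0 etae; rewrite mxvecK.
    have [H1 H2 H3] := Hzf eta eta0; split => //.
      by move=> m; apply: (le_trans (H1 m)); exact: ltW.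
    by apply: (le_trans H2); rewrite lerD2l ltW.
  have [v [[Hv1 Hv2 Hv3] Bv]] := clv _ _ FA (nbhsx_ballx vb r r0).
  exists (vec_mx v); split => // i j.
  move: Bv => [_ /(_ ord0 (mxvec_index i j))]; rewrite /ball /=.
  by rewrite /zb !vE distrC => /ltW.
exfalso.
have Cx0 : forall x : Mat, 0 <= Cx x.
  by move=> x; apply: sumr_ge0 => ij _; rewrite addr_ge0 ?mulr_ge0.
have hzb : forall m, h m zb <= 0.
  move=> m; have [C0 C00 HC] := @lsc (h m) zb (hc m) (hd m zb).
  apply/ler_addgt0Pr => e e0; rewrite add0r.
  have e20 : 0 < e / 2 by rewrite divr_gt0.
  have r0 : 0 < e / 2 / (C0 + 1) by rewrite divr_gt0 // ltr_wpDl.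
  have [w [Hw1 _ _ Hw4]] := approx _ _ e20 r0.
  have := HC w _ Hw4; have := Hw1 m; have := @small_mul _ _ C00 e20; lra.
have Qclose : forall (a : Mat) e, 0 < e -> exists2 r, 0 < r &
    forall w : Mat, (forall i j, `|w i j - zb i j| <= r) ->
    `|Q (w - a) - Q (zb - a)| <= e.
  move=> a e e0; exists (Num.min 1 (e / (Cx (zb - a) + 1))).
    by rewrite lt_min ltr01 divr_gt0 // ltr_wpDl.
  move=> w Hw.
  have -> : w - a = (zb - a) + (w - zb) by rewrite [RHS]addrC addrA subrK.
  set r := Num.min 1 (e / (Cx (zb - a) + 1)).
  have HB := @Q_add_bound (zb - a) (w - zb) r.
  apply: (le_trans (HB _ _ _)).
  - by rewrite le_min ler01 ltW // divr_gt0 // ltr_wpDl.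
  - by rewrite ge_min lexx.
  - by move=> i j; move: (Hw i j); rewrite !mxE.
  apply: (le_trans _ (@small_mul _ _ (Cx0 (zb - a)) e0)).
  by apply: ler_wpM2l => //; rewrite ge_min lexx orbT.
have hQ : Q (zb - p) <= Qs.
  apply/ler_addgt0Pr => e e0.
  have e20 : 0 < e / 2 by rewrite divr_gt0.
  have [r r0 Hr] := Qclose p _ e20.
  have [w [_ Hw2 _ Hw4]] := approx _ _ e20 r0.
  have := Hr w Hw4; rewrite ler_norml => /andP[H1 H2]; lra.
have hd0 : d <= Q (zb - zs).
  apply/ler_addgt0Pr => e e0.
  have [r r0 Hr] := Qclose zs _ e0.
  have [w [_ _ Hw3 Hw4]] := approx _ _ e0 r0.
  have := Hr w Hw4; rewrite ler_norml => /andP[H1 H2]; lra.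
have := @strong _ h p zs hc hzs zmin zb hzb; rewrite -/Qs; lra.
Qed.
Lemma up_term (h : Mat -> R) zs u e : derivable h zs u -> h zs <= 0 -> 0 < e ->
  \forall l \near +oo, psi (l * h (zs + l^-1 *: u)) <=
    (if h zs == 0 then psi ('D_u h zs) else 0) + e.
Proof.
move=> hd hz e0.
have [r r0 Hr] := @der_ball h zs u hd _ (ltr01 : (0:R) < 1).
have [r' r'0 Hr'] := @der_ball h zs u hd _ e0.
set D := 'D_u h zs.
near=> l.
have l0 : 0 < l by near: l; apply: nbhs_pinfty_gt; rewrite num_real.
have lr : r^-1 < l by near: l; apply: nbhs_pinfty_gt; rewrite num_real.
have lr' : r'^-1 < l by near: l; apply: nbhs_pinfty_gt; rewrite num_real.
have tpos : 0 < `|l^-1| by rewrite normr_gt0 invr_eq0 gt_eqF.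
have tr : `|l^-1| < r by rewrite gtr0_norm ?invr_gt0 // invf_plt ?posrE.
have tr' : `|l^-1| < r' by rewrite gtr0_norm ?invr_gt0 // invf_plt ?posrE.
have := Hr _ tpos tr; have := Hr' _ tpos tr'; rewrite invrK -/D.
case: eqP => [hz0|hz0].
  rewrite hz0 subr0 => H1 _.
  by apply: (le_trans (psi_lip _ D)); rewrite lerD2l ltW.
have hzn : h zs < 0 by rewrite lt_neqAle hz andbT; apply/eqP.
move=> _; rewrite ltr_norml => /andP[_ H2].
have lhz : (D + 1 - ln e) / (- h zs) < l.
  by near: l; apply: nbhs_pinfty_gt; rewrite num_real.
rewrite ltr_pdivrMr ?oppr_gt0 // mulrN in lhz.
have H3 : l * h (zs + l^-1 *: u) <= ln e.
  rewrite mulrBr in H2; lra.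
rewrite add0r; apply: (le_trans (psi_le_exp _)).
by rewrite -[e in _ <= e](lnK e0) ler_expR.
Unshelve. all: by end_near. Qed.

Lemma low_term (h : Mat -> R) zs z l : convex_function setT h ->
  (forall v, derivable h zs v) -> h zs <= 0 -> 0 < l ->
  (if h zs == 0 then psi ('D_(l *: (z - zs)) h zs) else 0) <= psi (l * h z).
Proof.
move=> hc hd hz l0; case: eqP => [hz0|_]; last exact: psi_ge0.
apply: psi_mono.
have li0 : 0 < l^-1 by rewrite invr_gt0.
have := @der_le_quot h zs (l *: (z - zs)) l^-1 hc (hd _) li0.
rewrite invrK scalerA mulVf ?gt_eqF // scale1r hz0 subr0.
by rewrite (_ : zs + (z - zs) = z) // addrC subrK.
Qed.
Lemma Phi_up (g w lam xi : Mat) (rho : R) (zs u : Mat) (e : R) : 0 < rho -> 0 < e ->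
  \forall l \near +oo, Phi g w lam xi rho (zs + l^-1 *: u) <=
     Phi g w lam xi rho zs + e.
Proof.
move=> r0 e0.
set x := zs - pp g w lam xi rho.
have Cx0 : 0 <= Cx x by apply: sumr_ge0 => ij _; rewrite addr_ge0 ?mulr_ge0.
set A := rho / 2 * Cx x * (1 + Q u).
have A0 : 0 <= A.
  rewrite /A.
  apply: mulr_ge0; last by rewrite addr_ge0 ?Q_ge0.
  by apply: mulr_ge0 => //; rewrite divr_ge0 // ltW.
near=> l.
have l1 : 1 + Q u < l by near: l; apply: nbhs_pinfty_gt; rewrite num_real.
have lA : A / e < l by near: l; apply: nbhs_pinfty_gt; rewrite num_real.
have Qu0 := Q_ge0 u.
have l0 : 0 < l by lra.
rewrite ltr_pdivrMr // in lA.
rewrite !Phi_Q // -/x.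
have -> : zs + l^-1 *: u - pp g w lam xi rho = x + l^-1 *: u.
  by rewrite /x addrAC.
have HB := @Q_add_bound x (l^-1 *: u) (l^-1 * (1 + Q u)).
have li0 : 0 < l^-1 by rewrite invr_gt0.
have rr0 : 0 <= l^-1 * (1 + Q u).
  by apply: mulr_ge0; [exact: ltW | rewrite addr_ge0 ?Q_ge0].
have rr1 : l^-1 * (1 + Q u) <= 1.
  by rewrite mulrC ler_pdivrMr // mul1r ltW.
have := HB rr0 rr1.
have ent : forall i j, `|(l^-1 *: u) i j| <= l^-1 * (1 + Q u).
  move=> i j; rewrite mxE normrM gtr0_norm //.
  by apply: ler_wpM2l; [exact: ltW | exact: abs_le_Q].
move=> /(_ ent); rewrite ler_norml => /andP[_ H2].
have H3 : rho / 2 * (Cx x * (l^-1 * (1 + Q u))) <= e.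
  have -> : rho / 2 * (Cx x * (l^-1 * (1 + Q u))) = A / l.
    by rewrite /A; field; rewrite gt_eqF.
  by rewrite ler_pdivrMr // mulrC ltW.
have H4 : rho / 2 * Q (x + l^-1 *: u) <= rho / 2 * Q x +
    rho / 2 * (Cx x * (l^-1 * (1 + Q u))).
  rewrite -mulrDr; apply: ler_wpM2l; [by rewrite divr_ge0 // ltW | lra].
lra.
Unshelve. all: by end_near. Qed.
End S.

Theorem proposition4 (R : realType) (J K M I P : nat) (X Y : Type)
  (phi : 'M[R]_(J, K) -> X -> Y -> R) (r : 'M[R]_(J, K) -> R) (beta : R)
  (xs : 'I_I -> X) (ys : 'I_I -> Y)
  (W : set 'M[R]_(J, K)) (h : 'I_M -> 'M[R]_(J, K) -> R)
  (w lam zt xi g zstar : 'M[R]_(J, K)) (rho delta : R)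
  (zl : R -> 'M[R]_(J, K)) :
  (0 < I)%N -> (0 < P)%N -> 0 < beta ->
  (forall x y, convex_function setT (fun z : 'M[R]_(J, K) => phi z x y)) -> convex_function setT r ->
  subgradient (emp_risk phi r beta P xs ys) zt g ->
  compact W -> convex_set W ->
  (forall m, convex_function setT (h m)) -> (forall m, C2 (h m)) ->
  W `&` [set z | frob_norm (z - zt) <= delta] = [set z | forall m, h m z <= 0] ->
  0 < rho -> 0 < delta ->
  (* zstar = argmin of Phi over W ∩ What *)
  (W `&` [set z | frob_norm (z - zt) <= delta]) zstar ->
  (forall z, (W `&` [set z | frob_norm (z - zt) <= delta]) z ->
     Phi g w lam xi rho zstar <= Phi g w lam xi rho z) ->
  (* zl l = argmin over all z of Phi + penalty, for l > 0 *)
  (forall l, 0 < l -> forall z,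
     Phi g w lam xi rho (zl l) + penalty h l (zl l)
       <= Phi g w lam xi rho z + penalty h l z) ->
  frob_norm (zl l - zstar) @[l --> +oo] --> 0.

Proof.
move=> I0 P0 b0 phic rc sg Wc Wcvx hc hC2 Sdef rho0 delta0 zsS zsmin zlmin.
have hd : forall m z u, derivable (h m) z u := fun m z u => (hC2 m u u).1 z.
set p := pp g w lam xi rho; set k0 := K0 g w lam xi rho.
have PhiE : forall z, Phi g w lam xi rho z = rho / 2 * Q (z - p) + k0.
  by move=> z; rewrite Phi_Q.
have r20 : 0 < rho / 2 by rewrite divr_gt0.
have hzs : forall m, h m zstar <= 0 by rewrite Sdef in zsS.
have zmin : forall z, (forall m, h m z <= 0) -> Q (zstar - p) <= Q (z - p).
  move=> z hz; have : (W `&` [set z | frob_norm (z - zt) <= delta]) z by rewrite Sdef.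
  by move/zsmin; rewrite !PhiE lerD2r ler_pM2l.
have Phige : forall z, k0 <= Phi g w lam xi rho z.
  by move=> z; rewrite PhiE lerDr; apply: mulr_ge0; [exact: ltW | exact: Q_ge0].
set c := fun m u => if h m zstar == 0 then psi ('D_u (h m) zstar) else 0.
set L := fun u => \sum_(m < M) c m u.
have c0 : forall m u, 0 <= c m u by move=> m u; rewrite /c; case: ifP => _; rewrite ?psi_ge0.
have L0 : forall u, 0 <= L u by move=> u; apply: sumr_ge0 => m _.
set Linf := inf (range L).
have Lb : has_lbound (range L) by exists 0 => _ [u _ <-].
have Lne : range L !=set0 by exists (L 0), 0.
have pen_sum : forall l z, penalty h l z = \sum_(m < M) psi (l * h m z) by [].
have lower : forall l, 0 < l -> Linf <= penalty h l (zl l).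
  move=> l l0; apply: (le_trans (ge_inf Lb (_ : range L (L (l *: (zl l - zstar)))))).
    by exists (l *: (zl l - zstar)).
  rewrite pen_sum; apply: ler_sum => m _.
  exact: low_term (hc m) (hd m zstar) (hzs m) l0.
have upper : forall u e, 0 < e -> \forall l \near +oo,
    penalty h l (zstar + l^-1 *: u) <= L u + e.
  move=> u e e0.
  have eM0 : 0 < e / (M%:R + 1) by rewrite divr_gt0 // ltr_wpDl.
  near=> l.
  have Hl : forall m, psi (l * h m (zstar + l^-1 *: u)) <= c m u + e / (M%:R + 1).
    near: l; apply: filter_forall => m.
    exact: (@up_term _ _ _ (h m) zstar u _ (hd m zstar u) (hzs m) eM0).
  rewrite pen_sum; apply: (le_trans (ler_sum _ (fun m _ => Hl m))).
  rewrite big_split /= sumr_const card_ord lerD2l.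
  rewrite -[e / _ *+ M]mulr_natr mulrAC ler_pdivrMr ?ltr_wpDl //.
  have : (0:R) <= M%:R by [].
  nra.
apply/cvgrPdist_lt => eps eps0.
have [eta eta0 Heta] := @claim _ _ _ _ h p zstar hc hd hzs zmin (eps ^+ 2) (exprn_gt0 _ eps0).
set e := eta * rho / 6.
have e0 : 0 < e by rewrite /e divr_gt0 ?mulr_gt0.
have [_ [u _ <-] Lue] := inf_adherent e0 (conj Lne Lb).
set B := Phi g w lam xi rho zstar + L u + 2 * e - k0.
near=> l.
have l0 : 0 < l by near: l; apply: nbhs_pinfty_gt; rewrite num_real.
have lB : B / eta < l by near: l; apply: nbhs_pinfty_gt; rewrite num_real.
have U1 : penalty h l (zstar + l^-1 *: u) <= L u + e by near: l; exact: upper.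
have U2 : Phi g w lam xi rho (zstar + l^-1 *: u) <= Phi g w lam xi rho zstar + e.
  by near: l; exact: Phi_up.
have H := zlmin l l0 (zstar + l^-1 *: u).
have Lo := lower l l0.
have Pg := Phige (zl l).
have hzl : forall m, h m (zl l) <= eta.
  move=> m.
  have T : psi (l * h m (zl l)) <= penalty h l (zl l).
    rewrite pen_sum (bigD1 m) //= lerDl; apply: sumr_ge0 => *; exact: psi_ge0.
  have := psi_ge (l * h m (zl l)).
  rewrite ltr_pdivrMr // in lB.
  move=> T2; rewrite -(ler_pM2l l0); rewrite /B in lB.
  set P1 := Phi g w lam xi rho (zl l) in H Pg.
  set P2 := Phi g w lam xi rho (zstar + l^-1 *: u) in H U2.
  set P3 := Phi g w lam xi rho zstar in U2 lB.
  set q1 := penalty h l (zl l) in H T Lo.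
  set q2 := penalty h l (zstar + l^-1 *: u) in H U1.
  move: (l * h m (zl l)) T T2 => a T T2.
  move: (psi a) T T2 => b T T2.
  lra.
have hQ : Q (zl l - p) <= Q (zstar - p) + eta.
  have := PhiE (zl l); have := PhiE zstar.
  move=> E1 E2.
  rewrite -(ler_pM2l r20).
  have H5 : rho / 2 * Q (zl l - p) < rho / 2 * Q (zstar - p) + 3 * e by lra.
  have -> : rho / 2 * (Q (zstar - p) + eta) = rho / 2 * Q (zstar - p) + 3 * e.
    by rewrite /e; field.
  exact: ltW.
have HQ := Heta _ hzl hQ.
rewrite sub0r normrN ger0_norm ?sqrtr_ge0 // /frob_norm -/(Q _).
have : Num.sqrt (Q (zl l - zstar)) < Num.sqrt (eps ^+ 2).
  by rewrite ltr_sqrt ?exprn_gt0.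
by rewrite sqrtr_sqr gtr0_norm.
Unshelve. all: by end_near. Qed.
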